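(* With the notation of the context, the following equality of (virtual) 3-sort species holds: \[ \mathcal G_{\neq 2}(X, X+Y, Z) = \mathcal M\circ\mathcal P - XY - \mathcal E_2(Z). \]
   Context: A (combinatorial) species is a functor from finite sets with bijections to finite sets with bijections; a $k$-sort species is a functor from $k$-tuples of finite sets with sort-preserving bijections to finite sets with bijections; species are equal if naturally isomorphic, and virtual species are formal differences of species. Sum: $(F+G)[U]=F[U]\sqcup G[U]$; product: $(F\cdot G)[U]=\bigsqcup_{U=V+W}F[V]\times G[W]$ over ordered decompositions into disjoint (possibly empty) parts (componentwise for $k$-tuples); composition of a 1-sort $F$ with a $k$-sort $G$ satisfying $G[\emptyset]=0$: $(F\circ G)[U]=\bigsqcup_{\pi}F[\pi]\times\prod_{B\in\pi}G[B]$ over partitions $\pi$ of the $k$-set $U$ into blocks that are nonempty $k$-tuples; multisort substitution $F(G_1,\dots,G_k)$ is defined analogously; all operations extend to virtual species. $X,Y,Z$ denote the singleton species of three different sorts, $\mathcal E$ the species of sets (one structure on every set), $\mathcal E_n$ its restriction to sets of size $n$, $\mathcal E_{\geq m}$ to sizes $\geq m$. Graphs are finite and simple; a leaf is a vertex of degree $1$; two distinct vertices are siblings if they have equal closed neighborhoods $N[v]=\{v\}\cup N(v)$. $\mathcal M$ is the 1-sort species of co-mating graphs: $\mathcal M[U]$ is the set of connected graphs with vertex set $U$ having no siblings. $\mathcal G_{\neq 2}(X,Y,Z)$ is the 3-sort species with $\mathcal G_{\neq 2}[(U_1,U_2,U_3)]$ the set of connected graphs on $U_1\sqcup U_2\sqcup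 U_3$ such that $U_2$ is exactly the set of leaves, $U_3$ exactly the set of vertices having a sibling, and $U_1$ the remaining vertices. Thus $\mathcal G_{\neq2}(X,X+Y,Z)$ has as structures on $(U_1,U_2,U_3)$ the connected graphs on $U_1\sqcup U_2\sqcup U_3$ in which $U_3$ is exactly the set of vertices with siblings, every vertex of $U_2$ is a leaf, and $U_1$ contains all other vertices (leaves may lie in $U_1$ or $U_2$). The species of tufts is $\mathcal T(X,Y)=X\,\mathcal E_{\geq1}(Y)$, and the species of patches is $\mathcal P(X,Y,Z)=\big(1+X+\mathcal E_{\geq 2}(Z)\big)\cdot(\mathcal E\circ\mathcal T)-1$, where $1=\mathcal E_0$. *)

(* Defs.v *)
(* 3-sort finite sets are modelled as a finType V together
   with a sort function s : V -> 'I_3 (sort 0 = X, sort 1 = Y, sort 2 = Z).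
   A species is given by a type of "raw" structures on V, a validity predicate
   (depending on the sorts) and a transport map along bijections.  *)
From mathcomp Require Import all_boot.
Set Implicit Arguments.
Unset Strict Implicit.
Unset Printing Implicit Defensive.

Definition isX (V : finType) (s : V -> 'I_3) (v : V) : bool := nat_of_ord (s v) == 0.
Definition isY (V : finType) (s : V -> 'I_3) (v : V) : bool := nat_of_ord (s v) == 1.
Definition isZ (V : finType) (s : V -> 'I_3) (v : V) : bool := nat_of_ord (s v) == 2.

Section Graphs.
Variable T : finType.
Implicit Types (D : {set T}) (E : {set T * T}).

Definition simple_graph_on D E : bool :=
  [forall p in E, [&& p.1 \in D, p.2 \in D, p.1 != p.2 & (p.2, p.1) \in E]].

Definition open_nbh D E (x : T) : {set T} := [set y in D | (x, y) \in E].
Definition closed_nbh D E (x : T) : {set T} := x |: open_nbh D E x.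

Definition connected_on D E : bool :=
  (D != set0) &&
  [forall x in D, forall y in D, connect [rel a b | (a, b) \in E] x y].

Definition is_leaf D E (x : T) : bool := #|open_nbh D E x| == 1.

Definition has_sibling D E (x : T) : bool :=
  [exists y in D, (y != x) && (closed_nbh D E y == closed_nbh D E x)].
End Graphs.

Definition natural_iso3 (L R : finType -> Type)
  (okL : forall V : finType, (V -> 'I_3) -> L V -> bool)
  (okR : forall V : finType, (V -> 'I_3) -> R V -> bool)
  (trL : forall V W : finType, (V -> W) -> L V -> L W)
  (trR : forall V W : finType, (V -> W) -> R V -> R W) : Prop :=
  exists phi : forall V : finType, (V -> 'I_3) -> L V -> R V,
    [/\
        forall (V : finType) (s : V -> 'I_3) (x : L V),
          okL V s x -> okR V s (phi V s x),
        forall (V : finType) (s : V -> 'I_3) (x y : L V),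
          okL V s x -> okL V s y -> phi V s x = phi V s y -> x = y,
        forall (V : finType) (s : V -> 'I_3) (y : R V),
          okR V s y -> exists x, okL V s x /\ phi V s x = y
      &
        forall (V W : finType) (s : V -> 'I_3) (t : W -> 'I_3) (f : V -> W),
          bijective f -> (forall v, t (f v) = s v) ->
          forall x : L V, okL V s x -> phi W t (trL V W f x) = trR V W f (phi V s x)].

(* raw structures: a graph (edge set), or the unique XY-structure,
   or the unique E_2(Z)-structure *)
Definition LHSraw (V : finType) : Type := ({set V * V} + (unit + unit))%type.

(* G_{<>2}(X,X+Y,Z) on (V,s): connected simple graph on V such that the
   sort-Z vertices are exactly the vertices having a sibling, every sort-Y
   vertex is a leaf, and (as in G_{<>2}, where leaves and sibling-vertices are
   disjoint blocks) no leaf has a sibling; the remaining vertices (sort X)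
   are the other vertices, possibly including leaves. *)
Definition G_ne2_XXYZ (V : finType) (s : V -> 'I_3) (g : {set V * V}) : bool :=
  [&& simple_graph_on setT g, connected_on setT g,
      [forall v, has_sibling setT g v == isZ s v],
      [forall v, isY s v ==> is_leaf setT g v]
    & [forall v, ~~ (is_leaf setT g v && has_sibling setT g v)]].

Definition XY_ok (V : finType) (s : V -> 'I_3) : bool :=
  [&& #|[set v | isX s v]| == 1, #|[set v | isY s v]| == 1 & #|[set v | isZ s v]| == 0].

Definition E2Z_ok (V : finType) (s : V -> 'I_3) : bool :=
  [&& #|[set v | isX s v]| == 0, #|[set v | isY s v]| == 0 & #|[set v | isZ s v]| == 2].

Definition LHS_ok (V : finType) (s : V -> 'I_3) (x : LHSraw V) : bool :=
  match x with
  | inl g => G_ne2_XXYZ s g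
  | inr (inl _) => XY_ok s
  | inr (inr _) => E2Z_ok s
  end.

Definition LHS_tr (V W : finType) (f : V -> W) (x : LHSraw V) : LHSraw W :=
  match x with
  | inl g => inl [set (f p.1, f p.2) | p in g]
  | inr u => inr u
  end.

Definition core_ok (V : finType) (s : V -> 'I_3) (c : {set V}) : bool :=
  [|| c == set0,
      (#|c| == 1) && [forall v in c, isX s v]
    | (2 <= #|c|) && [forall v in c, isZ s v]].

Definition tuft_ok (V : finType) (s : V -> 'I_3) (t : {set V}) : bool :=
  [&& #|[set v in t | isX s v]| == 1, 0 < #|[set v in t | isY s v]|
    & [forall v in t, isX s v || isY s v]].

(* patch P = (1 + X + E_{>=2}(Z)) . (E o T) - 1 on the set B: a decomposition
   B = c + (B \ c), a (1+X+E_{>=2}(Z))-structure on c, and a partition of B \ c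
   into tufts; the "- 1" removes the unique structure on the empty set. *)
Definition P_ok (V : finType) (s : V -> 'I_3) (B c : {set V}) (T : {set {set V}}) : bool :=
  [&& B != set0, c \subset B, core_ok s c, partition T (B :\: c)
    & [forall t in T, tuft_ok s t]].

Definition M_ok (T : finType) (D : {set T}) (E : {set T * T}) : bool :=
  [&& simple_graph_on D E, connected_on D E & [forall x in D, ~~ has_sibling D E x]].

(* raw (M o P)-structure: a partition of V into blocks, a graph on the
   blocks, and for each block a patch (pdata B = (core, tufts)). *)
Record MPraw (V : finType) := MPRaw {
  mp_blocks : {set {set V}};
  mp_graph : {set {set V} * {set V}};
  mp_pdata : {ffun {set V} -> {set V} * {set {set V}}} }.

Definition MP_ok (V : finType) (s : V -> 'I_3) (r : MPraw V) : bool :=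
  [&& partition (mp_blocks r) [set: V],
      M_ok (mp_blocks r) (mp_graph r)
    & [forall B : {set V},
         if B \in mp_blocks r then P_ok s B (mp_pdata r B).1 (mp_pdata r B).2
         else mp_pdata r B == (set0, set0)]].

Definition MP_tr (V W : finType) (f : V -> W) (r : MPraw V) : MPraw W :=
  MPRaw ((fun B : {set V} => f @: B) @: mp_blocks r)
        ((fun p : {set V} * {set V} => (f @: p.1, f @: p.2)) @: mp_graph r)
        [ffun B' : {set W} =>
           let p := mp_pdata r (f @^-1: B') in
           (f @: p.1, (fun t : {set V} => f @: t) @: p.2)].

(* Submission.v *)
Require Import Defs.
From mathcomp Require Import all_boot.
Set Implicit Arguments.
Unset Strict Implicit.
Unset Printing Implicit Defensive.

Lemma bij_imset (A B : finType) (h : A -> B) (S : {set A}) (S' : {set B}) :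
  bijective h -> (forall a, (h a \in S') = (a \in S)) -> S' = h @: S.
Proof.
case=> h' hK h'K eqS; apply/setP=> b.
by rewrite -[b]h'K mem_imset ?eqS //; exact: can_inj hK.
Qed.

Lemma bij_exists (A B : finType) (h : A -> B) (P : pred B) :
  bijective h -> [exists b, P b] = [exists a, P (h a)].
Proof.
case=> h' hK h'K; apply/existsP/existsP => [[b Pb]|[a Pa]].
  by exists (h' b); rewrite h'K.
by exists (h a).
Qed.

Lemma bij_inj (A B : finType) (h : A -> B) : bijective h -> injective h.
Proof. by case=> h' hK _; exact: can_inj hK. Qed.

Lemma bij_setT (A B : finType) (h : A -> B) : bijective h -> h @: [set: A] = [set: B].
Proof. by move=> hb; symmetry; apply: bij_imset => // a; rewrite !inE. Qed.

Lemma imset_bij (A B : finType) (h : A -> B) :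
  bijective h -> bijective (fun S : {set A} => h @: S).
Proof.
case=> h' hK h'K; exists (fun S : {set B} => h' @: S) => S.
  by rewrite -imset_comp (eq_imset _ hK) imset_id.
by rewrite -imset_comp (eq_imset _ h'K) imset_id.
Qed.

Lemma pair_bij (A B : finType) (h : A -> B) :
  bijective h -> bijective (fun p : A * A => (h p.1, h p.2)).
Proof.
case=> h' hK h'K; exists (fun p : B * B => (h' p.1, h' p.2)) => -[a b] /=.
  by rewrite !hK. by rewrite !h'K.
Qed.

Lemma imset_reindexT (A B C : finType) (h : A -> B) (F : B -> C) :
  bijective h -> [set F x | x in [set: B]] = [set F (h a) | a in [set: A]].
Proof. by move=> hb; rewrite -(bij_setT hb) -imset_comp. Qed.

Section PhiDef.
Variables (V : finType) (s : V -> 'I_3) (g : {set V * V}).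

Definition cn (v : V) : {set V} :=
  [set w | ~~ isY s w && ((w == v) || ((v, w) \in g))].
Definition key (v : V) : {set V} :=
  if isY s v then [set w | [exists x, (x \in cn v) && (w \in cn x)]] else cn v.
Definition blk (v : V) : {set V} := [set y in [set: V] | key v == key y].
Definition blocks : {set {set V}} := preim_partition key [set: V].
Definition hasY (v : V) : bool := [exists w, isY s w && ((v, w) \in g)].
Definition Eg : {set V * V} :=
  [set p in g | [&& ~~ isY s p.1, ~~ isY s p.2 & key p.1 != key p.2]].
Definition mg : {set {set V} * {set V}} := [set (blk p.1, blk p.2) | p in Eg].
Definition core (B : {set V}) : {set V} := [set v in B | ~~ isY s v && ~~ hasY v].
Definition tuftset (v : V) : {set V} := v |: [set w | isY s w && ((v, w) \in g)].
Definition tufts (B : {set V}) : {set {set V}} :=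
  [set tuftset v | v in [set v in B | ~~ isY s v && hasY v]].
Definition pd : {ffun {set V} -> {set V} * {set {set V}}} :=
  [ffun B => if B \in blocks then (core B, tufts B) else (set0, set0)].
Definition phiG : MPraw V := MPRaw blocks mg pd.

Lemma blocksE : blocks = [set blk x | x in [set: V]].
Proof. by []. Qed.

End PhiDef.

Definition Kset (V : finType) : {set V * V} := [set p | p.1 != p.2].

Definition phi (V : finType) (s : V -> 'I_3) (x : LHSraw V) : MPraw V :=
  match x with inl g => phiG s g | inr _ => phiG s (Kset V) end.

Section Natural.
Variables (V W : finType) (s : V -> 'I_3) (t : W -> 'I_3) (f : V -> W).
Hypothesis fb : bijective f.
Hypothesis ft : forall v, t (f v) = s v.
Variable g : {set V * V}.
Let g' := [set (f p.1, f p.2) | p in g].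
Let finj := bij_inj fb.
Let pf := (fun p : V * V => (f p.1, f p.2)).
Let pfb : bijective pf := pair_bij fb.
Let Sf := (fun S : {set V} => f @: S).
Let Sfb : bijective Sf := imset_bij fb.
Let Sfinj := bij_inj Sfb.

Lemma g'E a b : ((f a, f b) \in g') = ((a, b) \in g).
Proof. exact: (mem_imset g (a, b) (bij_inj pfb)). Qed.

Lemma isY_f v : isY t (f v) = isY s v.
Proof. by rewrite /isY ft. Qed.

Lemma cn_f v : cn t g' (f v) = f @: cn s g v.
Proof.
apply: bij_imset => // u; rewrite !inE isY_f g'E (inj_eq finj) //.
Qed.

Lemma hasY_f v : hasY t g' (f v) = hasY s g v.
Proof.
by rewrite /hasY (bij_exists _ fb); apply: eq_existsb => u; rewrite isY_f g'E.
Qed.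

Lemma key_f v : key t g' (f v) = f @: key s g v.
Proof.
rewrite /key isY_f; case: (isY s v); last exact: cn_f.
apply: bij_imset => // u; rewrite !inE (bij_exists _ fb).
apply: eq_existsb => x; rewrite !cn_f !(mem_imset _ _ finj) //.
Qed.

Lemma blk_f v : blk t g' (f v) = f @: blk s g v.
Proof.
apply: bij_imset => // u; rewrite !inE !key_f.
by rewrite (inj_eq Sfinj).
Qed.

Lemma blocks_f : blocks t g' = Sf @: blocks s g.
Proof.
rewrite !blocksE (imset_reindexT _ fb) -imset_comp.
by apply: eq_imset => v /=; rewrite blk_f.
Qed.

Lemma Eg_f : Eg t g' = pf @: Eg s g.
Proof.
apply: bij_imset => // -[a b]; rewrite !inE /= g'E !isY_f !key_f (inj_eq Sfinj) //.
Qed.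

Lemma mg_f : mg t g' = (fun p : {set V} * {set V} => (f @: p.1, f @: p.2)) @: mg s g.
Proof.
rewrite /mg Eg_f -!imset_comp; apply: eq_imset => -[a b] /=.
by rewrite !blk_f.
Qed.

Lemma tuftset_f v : tuftset t g' (f v) = f @: tuftset s g v.
Proof.
apply: bij_imset => // u; rewrite !inE (inj_eq finj) // isY_f g'E //.
Qed.

Lemma core_f (B : {set V}) : core t g' (f @: B) = f @: core s g B.
Proof.
apply: bij_imset => // u; rewrite !inE (mem_imset _ _ finj) isY_f hasY_f //.
Qed.

Lemma tufts_f (B : {set V}) : tufts t g' (f @: B) = Sf @: tufts s g B.
Proof.
rewrite /tufts.
have -> : [set v in f @: B | ~~ isY t v && hasY t g' v] =
          f @: [set v in B | ~~ isY s v && hasY s g v].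
  apply: bij_imset => // u; rewrite !inE (mem_imset _ _ finj) isY_f hasY_f //.
rewrite -!imset_comp; apply: eq_imset => v /=; exact: tuftset_f.
Qed.

Lemma pd_f (B : {set V}) : pd t g' (f @: B) = (f @: (pd s g B).1, Sf @: (pd s g B).2).
Proof.
rewrite !ffunE blocks_f (mem_imset _ _ Sfinj).
case: ifP => _ /=; first by rewrite core_f tufts_f.
by rewrite !imset0.
Qed.

Lemma phiG_f : phiG t g' = MP_tr f (phiG s g).
Proof.
rewrite /phiG /MP_tr /=; congr MPRaw; first exact: blocks_f.
  exact: mg_f.
apply/ffunP => B'; rewrite [RHS]ffunE /=.
have eB : B' = f @: (f @^-1: B').
  apply/setP => w; case: fb => f' fK f'K.
  by rewrite -[w]f'K (mem_imset _ _ finj) !inE.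
have eP : f @^-1: (f @: (f @^-1: B')) = f @^-1: B'.
  by apply/setP => v; rewrite !inE -eB.
by have := pd_f (f @^-1: B'); rewrite -eB => ->.
Qed.

Lemma Kset_f : pf @: Kset V = Kset W.
Proof.
symmetry; apply: bij_imset => // -[a b]; rewrite !inE /= (inj_eq finj) //.
Qed.

End Natural.

Definition tof (V : finType) (r : MPraw V) (u : V) : {set V} :=
  pblock (mp_pdata r (pblock (mp_blocks r) u)).2 u.
Definition pedge (V : finType) (s : V -> 'I_3) (r : MPraw V) (u v : V) : bool :=
  [|| [&& ~~ isY s u, ~~ isY s v &
        (pblock (mp_blocks r) u == pblock (mp_blocks r) v) ||
        ((pblock (mp_blocks r) u, pblock (mp_blocks r) v) \in mp_graph r)],
      [&& isY s u, ~~ isY s v & v \in tof r u]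
    | [&& ~~ isY s u, isY s v & u \in tof r v]].
Definition psiG (V : finType) (s : V -> 'I_3) (r : MPraw V) : {set V * V} :=
  [set p | (p.1 != p.2) && pedge s r p.1 p.2].
Set Implicit Arguments.
Unset Strict Implicit.
Unset Printing Implicit Defensive.

Lemma sort3 (V : finType) (s : V -> 'I_3) v : [|| isX s v, isY s v | isZ s v].
Proof. by rewrite /isX /isY /isZ; case: (s v) => [[|[|[|n]]] Hn]. Qed.
Lemma XnY (V : finType) (s : V -> 'I_3) v : isX s v -> ~~ isY s v.
Proof. by rewrite /isX /isY => /eqP ->. Qed.
Lemma XnZ (V : finType) (s : V -> 'I_3) v : isX s v -> ~~ isZ s v.
Proof. by rewrite /isX /isZ => /eqP ->. Qed.
Lemma ZnY (V : finType) (s : V -> 'I_3) v : isZ s v -> ~~ isY s v.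
Proof. by rewrite /isZ /isY => /eqP ->. Qed.
Lemma nYXZ (V : finType) (s : V -> 'I_3) v : ~~ isY s v -> isX s v || isZ s v.
Proof. by have := sort3 s v; case: (isX s v); case: (isY s v). Qed.

Lemma connect_lift (T T' : finType) (e : rel T) (e' : rel T') (h : T -> T') x y :
  (forall a b, e a b -> connect e' (h a) (h b)) -> connect e x y -> connect e' (h x) (h y).
Proof.
move=> He /connectP [p]; elim: p x => [|z p IH] x /=; first by move=> _ ->.
case/andP => exz pz ey; exact: connect_trans (He _ _ exz) (IH _ pz ey).
Qed.

Section Good.
Variables (V : finType) (s : V -> 'I_3) (g : {set V * V}).
Hypothesis girr : forall v, (v, v) \notin g.
Hypothesis gsym : forall v w, ((v, w) \in g) = ((w, v) \in g).
Hypothesis gY : forall y, isY s y -> exists2 x, ~~ isY s x & forall w, ((y, w) \in g) = (w == x).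

Local Notation cn := (cn s g).
Local Notation key := (key s g).
Local Notation blk := (blk s g).
Local Notation blocks := (blocks s g).
Local Notation hasY := (hasY s g).
Local Notation mg := (mg s g).
Local Notation core := (core s g).
Local Notation tuftset := (tuftset s g).
Local Notation tufts := (tufts s g).

Lemma cn_self v : ~~ isY s v -> v \in cn v.
Proof. by move=> hv; rewrite inE hv eqxx. Qed.

Lemma keyN v : ~~ isY s v -> key v = cn v.
Proof. by move=> hv; rewrite /Submission.key (negbTE hv). Qed.

Lemma keyY y x : isY s y -> (y, x) \in g -> key y = cn x /\ ~~ isY s x.
Proof.
move=> hy yx; have [x0 hx0 nb] := gY hy.
have ex : x = x0 by apply/eqP; rewrite -nb.
subst x0.
have cny : cn y = [set x].
  apply/setP => w; rewrite !inE nb.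
  case: (eqVneq w y) => [->|_]; first by rewrite hy /=; apply/esym/negbTE; apply/eqP => e; move: hx0; rewrite -e hy.
  case: (eqVneq w x) => [->|nwx]; first by rewrite hx0.
  by rewrite /= andbF.
split=> //; rewrite /Submission.key hy; apply/setP => w; rewrite !inE cny.
apply/existsP/idP => [[z /andP [zx wz]]|wx]; first by move: zx wz; rewrite !inE => /eqP ->.
by exists x; rewrite !inE eqxx.
Qed.

Lemma rep v : exists2 a, ~~ isY s a & key a = key v.
Proof.
case hv: (isY s v); last by exists v; rewrite ?hv.
have [x hx nb] := gY hv.
have vx : (v, x) \in g by rewrite nb.
have [k1 _] := keyY hv vx.
by exists x => //; rewrite keyN.
Qed.

Lemma blk_mem v w : (w \in blk v) = (key v == key w).
Proof. by rewrite !inE. Qed.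

Lemma blk_self v : v \in blk v.
Proof. by rewrite blk_mem. Qed.

Lemma blk_eq v w : (blk v == blk w) = (key v == key w).
Proof.
apply/eqP/eqP => [e|e].
  by have := blk_self v; rewrite e blk_mem => /eqP.
by apply/setP => z; rewrite !blk_mem e.
Qed.

Lemma blocks_mem B : B \in blocks -> exists2 a, ~~ isY s a & B = blk a.
Proof.
rewrite blocksE => /imsetP [v _ ->].
have [a ha ka] := rep v; exists a => //.
by apply/eqP; rewrite blk_eq ka.
Qed.

Lemma blk_in v : blk v \in blocks.
Proof. by rewrite blocksE; apply: imset_f. Qed.

Lemma blocks_part : partition blocks [set: V].
Proof. exact: preim_partitionP. Qed.

Lemma pblock_blk v : pblock blocks v = blk v.
Proof. exact: def_pblock (partition_trivIset blocks_part) (blk_in v) (blk_self v). Qed.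

Lemma edge_twin a a' b : ~~ isY s a -> ~~ isY s a' -> ~~ isY s b ->
  key a = key a' -> (a, b) \in g -> a' != b -> (a', b) \in g.
Proof.
move=> ha ha' hb k ab nb.
have : b \in cn a by rewrite inE hb ab orbT.
by rewrite -!keyN // k keyN // inE hb eq_sym (negbTE nb).
Qed.

Lemma cn_eq_edge a b : ~~ isY s a -> ~~ isY s b -> key a = key b -> a != b -> (a, b) \in g.
Proof.
move=> ha hb k nab; have : b \in cn a by rewrite -keyN // k keyN // cn_self.
rewrite inE hb /= => /orP [/eqP e|//].
by rewrite e eqxx in nab.
Qed.

Lemma mgE a b : ~~ isY s a -> ~~ isY s b ->
  ((blk a, blk b) \in mg) = ((a, b) \in g) && (key a != key b).
Proof.
move=> ha hb; apply/imsetP/andP => [[[p q]] | [ab kab]].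
  rewrite inE /= => /andP [pq /and3P [hp hq kpq]] [e1 e2].
  move/eqP: e1; rewrite blk_eq => /eqP k1.
  move/eqP: e2; rewrite blk_eq => /eqP k2.
  have naq : a != q.
    by apply/eqP => e; move: kpq; rewrite -e -k1 eqxx.
  have aq : (a, q) \in g by apply: (edge_twin hp ha hq).
  have nba : b != a.
    by apply/eqP => e; move: kpq; rewrite -k1 -k2 e eqxx.
  have ba : (b, a) \in g.
    by apply: (edge_twin hq hb ha) => //; rewrite gsym.
  by rewrite gsym ba k1 k2.
by exists (a, b) => //; rewrite inE /= ab ha hb kab.
Qed.

Lemma tufts_triv (B : {set V}) : trivIset (tufts B).
Proof.
apply/trivIsetP => A1 A2 /imsetP [v1 H1 ->] /imsetP [v2 H2 ->] ne.
rewrite !inE in H1 H2; case/and3P: H1 => _ h1 _; case/and3P: H2 => _ h2 _.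
have nv : v1 != v2 by apply: contraNneq ne => ->.
rewrite -setI_eq0; apply/eqP/setP => w; rewrite !inE.
apply/negbTE/negP => /andP [H1w H2w].
case/orP: H1w => [/eqP e1|/andP [y1 e1]].
  subst w; case/orP: H2w => [/eqP e2|/andP [y2 _]].
    by rewrite e2 eqxx in nv.
  by rewrite y2 in h1.
case/orP: H2w => [/eqP e2|/andP [y2 e2]]; first by subst w; rewrite y1 in h2.
have [x _ nb] := gY y1.
rewrite gsym nb in e1; rewrite gsym nb in e2.
by rewrite (eqP e1) (eqP e2) eqxx in nv.
Qed.

Lemma tuft_pblock (B : {set V}) y x : isY s y -> (y, x) \in g -> x \in B ->
  pblock (tufts B) y = tuftset x.
Proof.
move=> hy yx xB; have [kx hx] := keyY hy yx.
apply: def_pblock; first exact: tufts_triv.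
  apply: imset_f; rewrite !inE xB hx /=.
  by apply/existsP; exists y; rewrite hy gsym yx.
by rewrite !inE hy gsym yx orbT.
Qed.

Lemma tof_edge y w : isY s y -> ~~ isY s w ->
  (w \in pblock (tufts (blk y)) y) = ((y, w) \in g).
Proof.
move=> hy hw; have [x hx nb] := gY hy.
have yx : (y, x) \in g by rewrite nb.
have [kx _] := keyY hy yx.
rewrite (tuft_pblock hy yx); last by rewrite blk_mem kx keyN.
by rewrite !inE nb (negbTE hw) orbF.
Qed.

Lemma psi_phi : psiG s (phiG s g) = g.
Proof.
apply/setP => -[u v]; rewrite inE /= /pedge /tof /=.
case: (eqVneq u v) => [<-|nuv] /=; first by rewrite (negbTE (girr u)).
rewrite !pblock_blk !ffunE !blk_in /=.
case hu: (isY s u); case hv: (isY s v) => /=.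
- have [x hx nb] := gY hu.
  by apply/esym/negbTE; rewrite nb; apply: contraNneq hx => <-; rewrite hv.
- by rewrite orbF tof_edge ?hv.
- by rewrite tof_edge ?hu ?hv // gsym.
- rewrite mgE ?hu ?hv // blk_eq.
  case: (eqVneq (key u) (key v)) => k /=; last by rewrite ?andbT ?orbF.
  by rewrite cn_eq_edge ?hu ?hv.
Qed.

Section OK.
Hypothesis gconn : connected_on [set: V] g.
Hypothesis gX : forall v, ~~ isY s v -> hasY v -> isX s v.
Hypothesis gZ : forall v, ~~ isY s v -> ~~ hasY v ->
  isZ s v = [exists w, [&& w != v, ~~ isY s w, ~~ hasY w & cn w == cn v]].

Lemma M_simple : simple_graph_on blocks mg.
Proof.
apply/forall_inP => -[B1 B2] /imsetP [[a b]].
rewrite inE /= => /andP [ab /and3P [ha hb kab]] [-> ->] /=.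
by rewrite !blk_in blk_eq kab mgE // gsym ab eq_sym kab.
Qed.

Lemma M_conn : connected_on blocks mg.
Proof.
case/andP: gconn => ne cg; apply/andP; split.
  case/set0Pn: ne => v _; apply/set0Pn; exists (blk v); exact: blk_in.
apply/forall_inP => B1 /blocks_mem [a ha ->]; apply/forall_inP => B2 /blocks_mem [b hb ->].
move/forall_inP: cg => /(_ a (in_setT a)) /forall_inP /(_ b (in_setT b)) cab.
apply: (connect_lift (h := blk) _ cab) => u v /= uv.
case hu: (isY s u).
  have [k hv] := keyY hu uv.
  by have /eqP -> : blk u == blk v by rewrite blk_eq k keyN.
case hv: (isY s v).
  rewrite gsym in uv; have [k _] := keyY hv uv.
  by have /eqP -> : blk u == blk v by rewrite blk_eq k keyN ?hu.
case: (eqVneq (key u) (key v)) => k.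
  by have /eqP -> : blk u == blk v by rewrite blk_eq k.
by apply: connect1; rewrite /= mgE ?hu ?hv // uv k.
Qed.

Lemma CN a w : ~~ isY s a -> ~~ isY s w ->
  (blk w \in closed_nbh blocks mg (blk a)) = (w \in cn a).
Proof.
move=> ha hw; rewrite !inE blk_in /= mgE // blk_eq hw /=.
case: (eqVneq (key w) (key a)) => k /=.
  case: (eqVneq w a) => //= nwa; symmetry; apply: cn_eq_edge => //.
  by rewrite eq_sym.
rewrite andbT; case: (eqVneq w a) => // e.
by rewrite e eqxx in k.
Qed.

Lemma M_nosib : [forall x in blocks, ~~ has_sibling blocks mg x].
Proof.
apply/forall_inP => B /blocks_mem [a ha ->].
apply/existsP => -[B' /andP [B'in /andP [nB' /eqP ecn]]].
have [b hb eB'] := blocks_mem B'in; subst B'.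
have ecb : cn b = cn a.
  apply/setP => w; case hw: (isY s w); first by rewrite !inE hw.
  by rewrite -(CN hb) ?hw // -(CN ha) ?hw // ecn.
by move: nB'; rewrite blk_eq !keyN // ecb eqxx.
Qed.

Section Block.
Variable a : V.
Hypothesis ha : ~~ isY s a.
Local Notation B := (blk a).

Lemma core_mem v : (v \in core B) = [&& key a == key v, ~~ isY s v & ~~ hasY v].
Proof. by rewrite !inE. Qed.

Lemma coreZ v : v \in core B -> isZ s v -> exists2 w, w \in core B & w != v.
Proof.
rewrite core_mem => /and3P [kv hv nh]; rewrite gZ //.
case/existsP => w /and4P [nwv hw nhw /eqP cw]; exists w => //.
rewrite core_mem hw nhw andbT; have -> : key w = key v by rewrite !keyN // cw.
by rewrite andbT.
Qed.

Lemma core_sib v w : v \in core B -> w \in core B -> w != v -> isZ s v.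
Proof.
rewrite !core_mem => /and3P [kv hv nhv] /and3P [kw hw nhw] nwv.
rewrite gZ //; apply/existsP; exists w; rewrite nwv hw nhw /=.
by rewrite -!keyN // -(eqP kv) -(eqP kw).
Qed.

Lemma core_okB : core_ok s (core B).
Proof.
rewrite /core_ok; case E: #|core B| => [|[|n]].
- by rewrite (cards0_eq E) eqxx.
- move/eqP/cards1P: E => [v ev]; rewrite ev /=.
  apply/orP; right; apply/orP; left; apply/forall_inP => w0; rewrite inE => /eqP ->.
  have vc : v \in core B by rewrite ev inE.
  have hv : ~~ isY s v by move: vc; rewrite core_mem => /and3P [].
  case/orP: (nYXZ hv) => // zv.
  by have [w1] := coreZ vc zv; rewrite ev inE => /eqP ->; rewrite eqxx.
- apply/orP; right; apply/orP; right; apply/andP; split => //.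
  apply/forall_inP => v vc.
  have : 0 < #|core B :\ v| by move: E; rewrite (cardsD1 v) vc add1n => -[->].
  case/card_gt0P => w; rewrite !inE => /andP [nwv wc].
  apply: (core_sib vc _ nwv); by rewrite !inE.
Qed.

Lemma tufts_cover : cover (tufts B) = B :\: core B.
Proof.
apply/setP => w; apply/bigcupP/idP => [[t /imsetP [v Hv ->] wt]|].
  move: Hv; rewrite !inE /= => /and3P [kv hv hyv].
  move: wt; rewrite !inE => /orP [/eqP ->|/andP [yw vw]].
    by rewrite kv hv hyv.
  rewrite gsym in vw; have [kw _] := keyY yw vw.
  by rewrite yw /= andbF /= kw -keyN // kv.
rewrite !inE /= => /andP [nc kw].
case hw: (isY s w).
  have [x hx nb] := gY hw.
  have wx : (w, x) \in g by rewrite nb.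
  have [kwx _] := keyY hw wx.
  exists (tuftset x); last by rewrite !inE hw gsym wx orbT.
  apply: imset_f; rewrite !inE hx /= (keyN hx) -kwx kw /=.
  by apply/existsP; exists w; rewrite hw gsym wx.
exists (tuftset w); last by rewrite !inE eqxx.
apply: imset_f; rewrite !inE kw hw /=.
by move: nc; rewrite kw hw /= negbK.
Qed.

Lemma tufts_part : partition (tufts B) (B :\: core B).
Proof.
apply/and3P; split; first by rewrite tufts_cover.
  exact: tufts_triv.
apply/negP => /imsetP [v _ e].
have : v \in tuftset v by rewrite !inE eqxx.
by rewrite -e inE.
Qed.

Lemma tufts_ok : [forall t in tufts B, tuft_ok s t].
Proof.
apply/forall_inP => t /imsetP [v Hv ->].
move: Hv; rewrite !inE => /and3P [kv hv hyv].
have xv := gX hv hyv.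
apply/and3P; split.
- have -> : [set w in tuftset v | isX s w] = [set v].
    apply/setP => w; rewrite !inE.
    case: (eqVneq w v) => [->|nwv] /=; first by rewrite xv.
    by apply/negbTE/negP => /andP [/andP [yw _] xw]; move: (XnY xw); rewrite yw.
  by rewrite cards1.
- case/existsP: hyv => y /andP [hy vy]; apply/card_gt0P; exists y.
  by rewrite !inE hy vy orbT.
- apply/forall_inP => w; rewrite !inE => /orP [/eqP ->|/andP [-> _]].
    by rewrite xv.
  by rewrite orbT.
Qed.

Lemma P_ok_blk : P_ok s B (core B) (tufts B).
Proof.
apply/and5P; split.
- by apply/set0Pn; exists a; exact: blk_self.
- by apply/subsetP => v; rewrite inE => /andP [].
- exact: core_okB.
- exact: tufts_part.
- exact: tufts_ok.
Qed.
End Block.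

Lemma phiG_ok : MP_ok s (phiG s g).
Proof.
apply/and3P; split => /=.
- exact: blocks_part.
- by apply/and3P; split; [exact: M_simple | exact: M_conn | exact: M_nosib].
- apply/forallP => B; rewrite ffunE; case: ifP => HB /=; rewrite HB //=.
  have [a ha ->] := blocks_mem HB; exact: P_ok_blk.
Qed.
End OK.

End Good.
Set Implicit Arguments.
Unset Strict Implicit.
Unset Printing Implicit Defensive.

Section Cnb.
Variables (V : finType) (g : {set V * V}).
Lemma cnbE v w : (w \in closed_nbh [set: V] g v) = (w == v) || ((v, w) \in g).
Proof. by rewrite !inE. Qed.
Lemma leaf1 y : is_leaf [set: V] g y -> exists x, forall w, ((y, w) \in g) = (w == x).
Proof.
move/cards1P => [x ex]; exists x => w.
by have := congr1 (fun S : {set _} => w \in S) ex; rewrite /= !inE.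
Qed.
Lemma sibI v w : w != v -> closed_nbh [set: V] g w = closed_nbh [set: V] g v ->
  has_sibling [set: V] g v.
Proof. by move=> nwv e; apply/existsP; exists w; rewrite in_setT nwv e eqxx. Qed.
End Cnb.

Lemma cn_cnb (V : finType) (s : V -> 'I_3) g x z :
  (z \in cn s g x) = ~~ isY s z && (z \in closed_nbh [set: V] g x).
Proof. by rewrite !inE. Qed.

Section FromG.
Variables (V : finType) (s : V -> 'I_3) (g : {set V * V}).
Hypothesis H : G_ne2_XXYZ s g.

Let sg : simple_graph_on [set: V] g. Proof. by case/and5P: H. Qed.
Let cg : connected_on [set: V] g. Proof. by case/and5P: H. Qed.
Let sibZ v : has_sibling [set: V] g v = isZ s v.
Proof. by case/and5P: H => _ _ /forallP /(_ v) /eqP. Qed.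
Let Yleaf v : isY s v -> is_leaf [set: V] g v.
Proof. by case/and5P: H => _ _ _ /forallP /(_ v) /implyP. Qed.
Let nls v : is_leaf [set: V] g v -> has_sibling [set: V] g v -> False.
Proof. by move=> l sb; case/and5P: H => _ _ _ _ /forallP /(_ v); rewrite l sb. Qed.

Lemma G_irr v : (v, v) \notin g.
Proof. by apply/negP => vv; move/forall_inP: sg => /(_ _ vv) /and4P [_ _ /=]; rewrite eqxx. Qed.
Lemma G_sym v w : ((v, w) \in g) = ((w, v) \in g).
Proof.
by apply/idP/idP => e; have := forall_inP sg _ e; case/and4P.
Qed.
Lemma G_conn : connected_on [set: V] g. Proof. exact: cg. Qed.

Lemma G_Y y : isY s y -> exists2 x, ~~ isY s x & forall w, ((y, w) \in g) = (w == x).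
Proof.
move=> hy; have [x nb] := leaf1 (Yleaf hy); exists x => //.
apply/negP => hx; have [x' nb'] := leaf1 (Yleaf hx).
have yx : (y, x) \in g by rewrite nb.
have ex' : x' = y by apply/esym/eqP; rewrite -nb' G_sym.
subst x'.
have nxy : x != y by apply: (contraTneq _ yx) => ->; exact: G_irr.
apply: (nls (Yleaf hy)); apply: (sibI nxy); apply/setP => w.
by rewrite !cnbE nb nb' orbC.
Qed.

Lemma G_X v : ~~ isY s v -> hasY s g v -> isX s v.
Proof.
move=> hv /existsP [y /andP [hy vy]].
case/orP: (nYXZ hv) => // zv; exfalso.
move: zv; rewrite -sibZ => /existsP [w /andP [_ /andP [nwv /eqP e]]].
have : y \in closed_nbh [set: V] g w by rewrite e cnbE vy orbT.
rewrite cnbE => /orP [/eqP ew|wy].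
  subst w; apply: (nls (Yleaf hy)); apply: (sibI _ (esym e)).
  by apply: contraNneq hv => ->.
have [x _ nb] := G_Y hy.
rewrite G_sym nb in wy; rewrite G_sym nb in vy.
by rewrite (eqP wy) (eqP vy) eqxx in nwv.
Qed.

Lemma G_Z v : ~~ isY s v -> ~~ hasY s g v ->
  isZ s v = [exists w, [&& w != v, ~~ isY s w, ~~ hasY s g w & cn s g w == cn s g v]].
Proof.
move=> hv nhv; rewrite -sibZ; apply/existsP/existsP.
  move=> [w /andP [_ /andP [nwv /eqP e]]]; exists w; rewrite nwv /=.
  have hw : ~~ isY s w.
    apply/negP => yw; apply: (nls (Yleaf yw)); apply: (sibI _ (esym e)).
    by rewrite eq_sym.
  rewrite hw /=; apply/andP; split.
    apply/existsP => -[y /andP [hy wy]]; move/negP: nhv; apply.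
    have : y \in closed_nbh [set: V] g v by rewrite -e cnbE wy orbT.
    rewrite cnbE => /orP [/eqP eyv|vy]; first by rewrite -eyv hy in hv.
    by apply/existsP; exists y; rewrite hy vy.
  by apply/eqP/setP => z; rewrite !cn_cnb e.
move=> [w /and4P [nwv hw nhw /eqP e]]; exists w; rewrite in_setT nwv /=.
apply/eqP/setP => z; case hz: (isY s z).
  rewrite !cnbE; apply/idP/idP => /orP [/eqP ez|ez].
  - by rewrite -ez hz in hw.
  - by case/negP: nhw; apply/existsP; exists z; rewrite hz ez.
  - by rewrite -ez hz in hv.
  - by case/negP: nhv; apply/existsP; exists z; rewrite hz ez.
by have := congr1 (fun S : {set _} => z \in S) e; rewrite /= !cn_cnb hz.
Qed.

End FromG.

Section Two.
Variables (V : finType) (s : V -> 'I_3).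

Lemma XY_elems : XY_ok s -> exists x y,
  [/\ isX s x, isY s y, (forall v, isX s v -> v = x),
      (forall v, isY s v -> v = y) & (forall v, ~~ isZ s v)].
Proof.
case/and3P => /cards1P [x ex] /cards1P [y ey] /eqP /cards0_eq ez.
have mx v : isX s v = (v == x).
  by have := congr1 (fun S : {set _} => v \in S) ex; rewrite /= !inE.
have my v : isY s v = (v == y).
  by have := congr1 (fun S : {set _} => v \in S) ey; rewrite /= !inE.
exists x, y; split.
- by rewrite mx.
- by rewrite my.
- by move=> v; rewrite mx => /eqP.
- by move=> v; rewrite my => /eqP.
- by move=> v; have := congr1 (fun S : {set _} => v \in S) ez; rewrite /= !inE => ->.
Qed.

Lemma E2Z_elems : E2Z_ok s -> exists a b : V,
  [/\ a != b, (forall v, isZ s v), (forall v, (v == a) || (v == b)) & (forall v, ~~ isY s v)].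
Proof.
case/and3P => /eqP /cards0_eq ex /eqP /cards0_eq ey /cards2P [a [b [nab ez]]].
have nX v : ~~ isX s v.
  by have := congr1 (fun S : {set _} => v \in S) ex; rewrite /= !inE => ->.
have nY v : ~~ isY s v.
  by have := congr1 (fun S : {set _} => v \in S) ey; rewrite /= !inE => ->.
have aZ v : isZ s v.
  by have := sort3 s v; rewrite (negbTE (nX v)) (negbTE (nY v)).
exists a, b; split => // v.
by have := congr1 (fun S : {set _} => v \in S) ez; rewrite /= !inE aZ.
Qed.

Lemma two_elems : XY_ok s || E2Z_ok s -> exists a b : V, a != b /\ forall v, (v == a) || (v == b).
Proof.
case/orP => [/XY_elems [x [y [hx hy ux uy nz]]] | /E2Z_elems [a [b [nab _ ab _]]]].
  exists x, y; split; first by apply: contraTneq hy => <-; exact: XnY.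
  move=> v; have := sort3 s v; rewrite (negbTE (nz v)) orbF.
  by case/orP => [/ux|/uy] ->; rewrite eqxx ?orbT.
by exists a, b.
Qed.

Lemma K_irr v : (v, v) \notin Kset V. Proof. by rewrite inE /= eqxx. Qed.
Lemma K_sym v w : ((v, w) \in Kset V) = ((w, v) \in Kset V). Proof. by rewrite !inE eq_sym. Qed.
Lemma K_conn : (exists v : V, True) -> connected_on [set: V] (Kset V).
Proof.
move=> [v _]; apply/andP; split; first by apply/set0Pn; exists v.
apply/forall_inP => a _; apply/forall_inP => b _.
case: (eqVneq a b) => [->|nab]; first exact: connect0.
by apply: connect1; rewrite /= inE.
Qed.

Lemma K_good_XY : XY_ok s ->
  [/\ (forall y, isY s y -> exists2 x, ~~ isY s x & forall w, ((y, w) \in Kset V) = (w == x)),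
      connected_on [set: V] (Kset V),
      (forall v, ~~ isY s v -> hasY s (Kset V) v -> isX s v)
    & (forall v, ~~ isY s v -> ~~ hasY s (Kset V) v ->
        isZ s v = [exists w, [&& w != v, ~~ isY s w, ~~ hasY s (Kset V) w &
                                  cn s (Kset V) w == cn s (Kset V) v]])].
Proof.
move=> /XY_elems [x [y [hx hy ux uy nz]]].
have nxy : x != y by apply: contraTneq hy => <-; exact: XnY.
have xy v : v = x \/ v = y.
  by have := sort3 s v; rewrite (negbTE (nz v)) orbF => /orP [/ux|/uy]; [left|right].
split.
- move=> y' /uy ->; exists x; first exact: XnY.
  move=> w; rewrite inE /=; case: (xy w) => ->; first by rewrite eq_sym nxy eqxx.
  by rewrite eqxx eq_sym (negbTE nxy).
- exact: K_conn (ex_intro _ x I).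
- move=> v hv _; have := nYXZ hv; by rewrite (negbTE (nz v)) orbF.
- move=> v hv; case: (xy v) => ev; last by rewrite ev hy in hv.
  case/negP; apply/existsP; exists y; rewrite hy inE /= ev.
  exact: nxy.
Qed.

Lemma K_good_E2Z : E2Z_ok s ->
  [/\ (forall y, isY s y -> exists2 x, ~~ isY s x & forall w, ((y, w) \in Kset V) = (w == x)),
      connected_on [set: V] (Kset V),
      (forall v, ~~ isY s v -> hasY s (Kset V) v -> isX s v)
    & (forall v, ~~ isY s v -> ~~ hasY s (Kset V) v ->
        isZ s v = [exists w, [&& w != v, ~~ isY s w, ~~ hasY s (Kset V) w &
                                  cn s (Kset V) w == cn s (Kset V) v]])].
Proof.
move=> /E2Z_elems [a [b [nab aZ ab nY]]].
have nhY v : ~~ hasY s (Kset V) v.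
  by apply/existsP => -[w /andP [hw _]]; move: (nY w); rewrite hw.
have cnT v : cn s (Kset V) v = [set: V].
  by apply/setP => z; rewrite !inE /= nY /= eq_sym; case: (v == z).
split.
- by move=> y hy; move: (nY y); rewrite hy.
- exact: K_conn (ex_intro _ a I).
- by move=> v _; rewrite (negbTE (nhY v)).
- move=> v _ _; rewrite aZ; symmetry; apply/existsP.
  case: (eqVneq v a) => [->|nva].
    by exists b; rewrite eq_sym nab nY nhY !cnT eqxx.
  by exists a; rewrite eq_sym nva nY nhY !cnT eqxx.
Qed.

Lemma not_G_K : XY_ok s || E2Z_ok s -> ~~ G_ne2_XXYZ s (Kset V).
Proof.
move=> /two_elems [a [b [nab ab]]]; apply/negP => H.
case/and5P: H => _ _ _ _ /forallP /(_ a); apply/negP; rewrite negbK.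
apply/andP; split.
  apply/cards1P; exists b; apply/setP => w; rewrite !inE /=.
  by case/orP: (ab w) => /eqP ->; rewrite ?eqxx // (negbTE nab).
apply: (sibI (w := b)); first by rewrite eq_sym.
apply/setP => w; rewrite !cnbE !inE /=.
by case/orP: (ab w) => /eqP ->; rewrite ?eqxx ?orbT //= (eq_sym b a) nab orbT.
Qed.

End Two.
Set Implicit Arguments.
Unset Strict Implicit.
Unset Printing Implicit Defensive.

Lemma MPraw_eta (V : finType) (r : MPraw V) :
  r = MPRaw (mp_blocks r) (mp_graph r) (mp_pdata r).
Proof. by case: r. Qed.

Lemma tuft_X (V : finType) (s : V -> 'I_3) t : tuft_ok s t -> exists2 c, c \in t & isX s c.
Proof.
case/and3P => /cards1P [c ec] _ _; exists c.
  by have := congr1 (fun S : {set _} => c \in S) ec; rewrite !inE eqxx => /andP [].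
by have := congr1 (fun S : {set _} => c \in S) ec; rewrite !inE eqxx => /andP [].
Qed.

Lemma tuft_Y (V : finType) (s : V -> 'I_3) t : tuft_ok s t -> exists2 y, y \in t & isY s y.
Proof.
by case/and3P => _ /card_gt0P [y]; rewrite inE => /andP [yt hy] _; exists y.
Qed.

Lemma tuft_nY (V : finType) (s : V -> 'I_3) t w1 w2 : tuft_ok s t ->
  w1 \in t -> w2 \in t -> ~~ isY s w1 -> ~~ isY s w2 -> w1 = w2.
Proof.
case/and3P => /cards1P [c ec] _ /forall_inP al w1t w2t h1 h2.
have xw w : w \in t -> ~~ isY s w -> w = c.
  move=> wt hw; have : isX s w by case/orP: (al w wt) => // yw; rewrite yw in hw.
  by move=> xw; have := congr1 (fun S : {set _} => w \in S) ec; rewrite !inE wt xw => /esym/eqP.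
by rewrite (xw _ w1t h1) (xw _ w2t h2).
Qed.

Lemma tuft_XY (V : finType) (s : V -> 'I_3) t w : tuft_ok s t -> w \in t -> isX s w || isY s w.
Proof. by case/and3P => _ _ /forall_inP al; exact: al. Qed.

Section Rev.
Variables (V : finType) (s : V -> 'I_3) (r : MPraw V).
Hypothesis Hr : MP_ok s r.

Local Notation P := (mp_blocks r).
Local Notation mgr := (mp_graph r).
Local Notation pdr := (mp_pdata r).
Local Notation pb := (pblock P).
Local Notation cr B := (pdr B).1.
Local Notation tf B := (pdr B).2.
Local Notation tof := (tof r).
Local Notation g := (psiG s r).

Let Ppart : partition P [set: V]. Proof. by case/and3P: Hr. Qed.
Let Mok : M_ok P mgr. Proof. by case/and3P: Hr. Qed.
Let Msimple : simple_graph_on P mgr. Proof. by case/and3P: Mok. Qed.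
Let Mconn : connected_on P mgr. Proof. by case/and3P: Mok. Qed.
Let Mnosib : [forall x in P, ~~ has_sibling P mgr x]. Proof. by case/and3P: Mok. Qed.
Let Pd B : B \in P -> P_ok s B (cr B) (tf B).
Proof. by case/and3P: Hr => _ _ /forallP /(_ B); case: ifP. Qed.
Let Pnd B : B \notin P -> pdr B = (set0, set0).
Proof. by move=> nB; case/and3P: Hr => _ _ /forallP /(_ B); rewrite (negbTE nB) => /eqP. Qed.
Let Ptriv : trivIset P. Proof. exact: partition_trivIset Ppart. Qed.
Let Pcov u : u \in cover P. Proof. by rewrite (cover_partition Ppart). Qed.

Lemma pb_in u : pb u \in P. Proof. exact: pblock_mem. Qed.
Lemma pb_self u : u \in pb u. Proof. by rewrite mem_pblock. Qed.
Lemma pb_def B u : B \in P -> u \in B -> pb u = B. Proof. exact: def_pblock. Qed.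
Lemma pb_eq u v : (pb u == pb v) = (v \in pb u). Proof. exact: eq_pblock. Qed.

Lemma mgr_in B1 B2 : (B1, B2) \in mgr -> [&& B1 \in P, B2 \in P, B1 != B2 & (B2, B1) \in mgr].
Proof. by move=> e; have := forall_inP Msimple _ e. Qed.

Section InBlock.
Variable B : {set V}.
Hypothesis BP : B \in P.
Let PB := Pd BP.
Lemma B_ne0 : B != set0. Proof. by case/and5P: PB. Qed.
Lemma cr_sub : cr B \subset B. Proof. by case/and5P: PB. Qed.
Lemma cr_ok : core_ok s (cr B). Proof. by case/and5P: PB. Qed.
Lemma tf_part : partition (tf B) (B :\: cr B). Proof. by case/and5P: PB. Qed.
Lemma tf_ok t : t \in tf B -> tuft_ok s t.
Proof. by case/and5P: PB => _ _ _ _ /forall_inP; apply. Qed.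
Lemma cr_XZ v : v \in cr B -> isX s v || isZ s v.
Proof.
move=> vc; case/or3P: cr_ok => [/eqP e|/andP [_ /forall_inP al]|/andP [_ /forall_inP al]].
- by rewrite e inE in vc.
- by rewrite al.
- by rewrite al ?orbT.
Qed.
Lemma cr_nY v : v \in cr B -> ~~ isY s v.
Proof. by move/cr_XZ => /orP [/XnY|/ZnY]. Qed.
Lemma tf_sub t : t \in tf B -> t \subset B :\: cr B.
Proof.
move=> tin; rewrite -(cover_partition tf_part); exact: bigcup_sup.
Qed.
Lemma tf_triv : trivIset (tf B). Proof. exact: partition_trivIset tf_part. Qed.
End InBlock.

Lemma tof_def u t : t \in tf (pb u) -> u \in t -> tof u = t.
Proof. move=> tin ut; exact: def_pblock (tf_triv (pb_in u)) tin ut. Qed.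

Lemma noncore u : u \notin cr (pb u) -> tof u \in tf (pb u) /\ u \in tof u.
Proof.
move=> nc; have uc : u \in cover (tf (pb u)).
  by rewrite (cover_partition (tf_part (pb_in u))) !inE nc pb_self.
by split; [exact: pblock_mem | rewrite mem_pblock].
Qed.

Lemma Y_noncore u : isY s u -> u \notin cr (pb u).
Proof. by move=> hu; apply/negP => /(cr_nY (pb_in u)); rewrite hu. Qed.

Lemma tof_ok u : u \notin cr (pb u) -> tuft_ok s (tof u).
Proof. by move/noncore => [tin _]; exact: (tf_ok (pb_in u) tin). Qed.

Lemma tof_mem u w : u \notin cr (pb u) -> w \in tof u ->
  [/\ pb w = pb u, w \notin cr (pb w) & tof w = tof u].
Proof.
move=> nc wt; have [tin ut] := noncore nc.
have := subsetP (tf_sub (pb_in u) tin) w wt; rewrite !inE => /andP [nwc wB].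
have e : pb w = pb u by exact: pb_def (pb_in u) wB.
split => //; first by rewrite e.
by apply: tof_def; rewrite ?e.
Qed.

Lemma block_nY B : B \in P -> exists2 w, w \in B & ~~ isY s w.
Proof.
move=> BP; case/set0Pn: (B_ne0 BP) => u uB.
have eu : pb u = B by exact: pb_def.
case: (boolP (u \in cr (pb u))) => [uc|nc].
  by exists u => //; apply: (cr_nY (pb_in u)).
have [c ct xc] := tuft_X (tof_ok nc).
exists c; last exact: XnY.
by have [e _ _] := tof_mem nc ct; rewrite -eu -e pb_self.
Qed.

Lemma eNN u v : ~~ isY s u -> ~~ isY s v ->
  ((u, v) \in g) = (u != v) && ((pb u == pb v) || ((pb u, pb v) \in mgr)).
Proof. by move=> hu hv; rewrite inE /pedge /= (negbTE hu) (negbTE hv) /= !orbF. Qed.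

Lemma eYN u v : isY s u -> ~~ isY s v -> ((u, v) \in g) = (v \in tof u).
Proof.
move=> hu hv; rewrite inE /pedge /= hu (negbTE hv) /= orbF.
by have -> : u != v by apply: contraTneq hu => ->.
Qed.

Lemma eNY u v : ~~ isY s u -> isY s v -> ((u, v) \in g) = (u \in tof v).
Proof.
move=> hu hv; rewrite inE /pedge /= hv (negbTE hu) /=.
by have -> : u != v by apply: contraNneq hu => ->.
Qed.

Lemma eYY u v : isY s u -> isY s v -> ((u, v) \in g) = false.
Proof. by move=> hu hv; rewrite inE /pedge /= hu hv /= andbF. Qed.

Lemma g_irr u : (u, u) \notin g.
Proof. by rewrite inE eqxx. Qed.

Lemma mgr_sym B1 B2 : ((B1, B2) \in mgr) = ((B2, B1) \in mgr).
Proof. by apply/idP/idP => /mgr_in /and4P []. Qed.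

Lemma g_sym u v : ((u, v) \in g) = ((v, u) \in g).
Proof.
case hu: (isY s u); case hv: (isY s v).
- by rewrite !eYY.
- by rewrite eYN ?hv // eNY ?hv.
- by rewrite eNY ?hu // eYN ?hu.
- by rewrite !eNN ?hu ?hv // eq_sym (eq_sym (pb u)) mgr_sym.
Qed.

Lemma Ynbr u : isY s u -> exists c,
  [/\ ~~ isY s c, c \in tof u, isX s c & forall w, ((u, w) \in g) = (w == c)].
Proof.
move=> hu; have nc := Y_noncore hu.
have [c ct xc] := tuft_X (tof_ok nc).
exists c; split => //; first exact: XnY.
move=> w; case hw: (isY s w).
  by rewrite eYY //; apply/esym/negbTE; apply: contraTneq hw => ->; rewrite (negbTE (XnY xc)).
rewrite eYN ?hw //; apply/idP/eqP => [wt|->] //.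
by apply: (tuft_nY (tof_ok nc)) wt ct _ _; rewrite ?hw ?XnY.
Qed.

Lemma g_Y y : isY s y -> exists2 x, ~~ isY s x & forall w, ((y, w) \in g) = (w == x).
Proof. by move/Ynbr => [c [hc _ _ nb]]; exists c. Qed.

Lemma hasY_core v : ~~ isY s v -> hasY s g v = (v \notin cr (pb v)).
Proof.
move=> hv; apply/existsP/idP => [[y /andP [hy vy]]|nc].
  rewrite eNY // in vy; have [e nc _] := tof_mem (Y_noncore hy) vy.
  exact: nc.
have [y yt hy] := tuft_Y (tof_ok nc).
have [_ _ ety] := tof_mem nc yt.
have [_ vt] := noncore nc.
by exists y; rewrite hy eNY // ety.
Qed.

Definition Kf (B : {set V}) : {set V} :=
  [set w | ~~ isY s w && (pb w \in closed_nbh P mgr B)].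

Lemma cnN u : ~~ isY s u -> cn s g u = Kf (pb u).
Proof.
move=> hu; apply/setP => w; rewrite !inE.
case hw: (isY s w) => //=.
rewrite /pedge (negbTE hu) hw /= pb_in /= orbF.
case: (eqVneq w u) => [->|nwu] /=; first by rewrite eqxx.
by rewrite eq_sym.
Qed.

Lemma keyE u : key s g u = Kf (pb u).
Proof.
case hu: (isY s u); last by rewrite keyN ?hu // cnN ?hu.
have [c [hc ct _ nb]] := Ynbr hu.
have uc : (u, c) \in g by rewrite nb.
have [k _] := keyY g_Y hu uc.
rewrite k cnN //; have [e _ _] := tof_mem (Y_noncore hu) ct.
by rewrite e.
Qed.

Lemma Kf_inj B1 B2 : B1 \in P -> B2 \in P -> Kf B1 = Kf B2 -> B1 = B2.
Proof.
move=> P1 P2 e.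
have ecn : closed_nbh P mgr B2 = closed_nbh P mgr B1.
  apply/setP => B; case: (boolP (B \in P)) => BP.
    have [w wB hw] := block_nY BP.
    have eB : pb w = B by exact: pb_def.
    have := congr1 (fun S : {set V} => w \in S) e.
    by rewrite /Kf !inE hw eB /= => ->.
  rewrite !inE (negbTE BP) /= !orbF.
  by apply/idP/idP => /eqP eB; [rewrite eB P2 in BP | rewrite eB P1 in BP].
apply/eqP; apply/negP => /negP nB.
move/forall_inP: Mnosib => /(_ B1 P1) /negP; apply.
by apply/existsP; exists B2; rewrite P2 eq_sym nB ecn eqxx.
Qed.

Lemma key_eq u v : (key s g u == key s g v) = (pb u == pb v).
Proof.
rewrite !keyE; apply/eqP/eqP => [e|->] //.
exact: Kf_inj (pb_in u) (pb_in v) e.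
Qed.

Lemma blk_g u : blk s g u = pb u.
Proof. by apply/setP => y; rewrite !inE key_eq pb_eq. Qed.

Lemma blocks_g : blocks s g = P.
Proof.
rewrite -[RHS](preim_partition_pblock Ppart) /Submission.blocks /preim_partition /equivalence_partition.
by apply: eq_imset => x; apply/setP => y; rewrite !inE key_eq.
Qed.

Lemma mg_g : mg s g = mgr.
Proof.
apply/setP => -[B1 B2]; apply/imsetP/idP => [[[a b]] Hab [-> ->]|H].
  move: Hab; rewrite inE /= => /andP [ab /and3P [ha hb kab]].
  rewrite !blk_g; rewrite key_eq in kab.
  by move: ab; rewrite eNN // (negbTE kab) /= => /andP [].
have /and4P [P1 P2 nB _] := mgr_in H.
have [w1 w1B h1] := block_nY P1; have [w2 w2B h2] := block_nY P2.
have e1 : pb w1 = B1 by exact: pb_def.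
have e2 : pb w2 = B2 by exact: pb_def.
exists (w1, w2); last by rewrite /= !blk_g e1 e2.
rewrite inE /= h1 h2 key_eq e1 e2 nB eNN // e1 e2 H orbT andbT /=.
by rewrite andbT; apply: contraNneq nB => e; rewrite -e1 -e2 e.
Qed.

Lemma core_g B : B \in P -> core s g B = cr B.
Proof.
move=> BP; apply/setP => v; rewrite !inE; apply/idP/idP.
  case/and3P => vB hv; rewrite hasY_core // (pb_def BP vB).
  by rewrite negbK.
move=> vc; have vB := subsetP (cr_sub BP) v vc.
by rewrite vB (cr_nY BP vc) hasY_core ?(cr_nY BP vc) // (pb_def BP vB) vc.
Qed.

Lemma tuftset_g v : ~~ isY s v -> v \notin cr (pb v) -> tuftset s g v = tof v.
Proof.
move=> hv nc; have [_ vt] := noncore nc.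
apply/setP => z; rewrite /Submission.tuftset in_setU1 inE; case hz: (isY s z) => /=.
  have -> : (z == v) = false by apply: contraTF hz => /eqP ->.
  rewrite eNY ?hz //=; apply/idP/idP => H.
    have [_ _ e] := tof_mem (Y_noncore hz) H; rewrite e; by have [] := noncore (Y_noncore hz).
  by have [_ _ e] := tof_mem nc H; rewrite e.
rewrite orbF; apply/eqP/idP => [->|zt] //.
by apply: (tuft_nY (tof_ok nc)) zt vt _ hv; rewrite hz.
Qed.

Lemma tufts_g B : B \in P -> tufts s g B = tf B.
Proof.
move=> BP; apply/setP => t; apply/imsetP/idP => [[v Hv ->]|tin].
  move: Hv; rewrite !inE => /and3P [vB hv hy].
  rewrite hasY_core // in hy; rewrite tuftset_g //.
  have [tin _] := noncore hy; by rewrite -(pb_def BP vB).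
have [c ct xc] := tuft_X (tf_ok BP tin).
have := subsetP (tf_sub BP tin) c ct; rewrite !inE => /andP [ncB cB].
have ec : pb c = B by exact: pb_def.
have hc := XnY xc.
have nc : c \notin cr (pb c) by rewrite ec.
exists c; first by rewrite !inE cB hc hasY_core.
rewrite tuftset_g //; symmetry; apply: tof_def => //; by rewrite ec.
Qed.

Lemma phi_psi : phiG s g = r.
Proof.
rewrite [RHS]MPraw_eta /phiG blocks_g mg_g; congr MPRaw.
apply/ffunP => B; rewrite ffunE blocks_g.
case: (boolP (B \in P)) => BP; last by rewrite Pnd.
by rewrite core_g // tufts_g //; case: (pdr B).
Qed.

Local Notation N x := (closed_nbh [set: V] g x).

Lemma g_simple : simple_graph_on [set: V] g.
Proof.
apply/forall_inP => -[u v] uv /=; rewrite !in_setT /= g_sym uv andbT.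
by move: uv; rewrite inE => /andP [].
Qed.

Lemma single_block B : B \in P -> (forall B', (B, B') \notin mgr) -> forall z, pb z = B.
Proof.
move=> BP hno z; case/andP: Mconn => _ /forall_inP /(_ B BP) /forall_inP /(_ _ (pb_in z)).
case/connectP => p; case: p => [|B1 p] /=; first by move=> _ ->.
by case/andP => bb1; rewrite (negbTE (hno B1)) in bb1.
Qed.

Lemma g_conn : connected_on [set: V] g.
Proof.
case/andP: Mconn => /set0Pn [B0 B0P] Mc.
have [u0 _ _] := block_nY B0P.
pose rep (B : {set V}) := odflt u0 [pick w in B | ~~ isY s w].
have rep_spec B : B \in P -> rep B \in B /\ ~~ isY s (rep B).
  move=> BP; rewrite /rep; case: pickP => [w /andP [wB hw]|none] //=.
  by have [w wB hw] := block_nY BP; have := none w; rewrite wB hw.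
pose e := [rel a b | (a, b) \in g].
have esym : connect_sym e by apply: sym_connect_sym => a b; rewrite /= g_sym.
have to_repN x : ~~ isY s x -> connect e x (rep (pb x)).
  move=> hx; have [rB hr] := rep_spec _ (pb_in x).
  case: (eqVneq x (rep (pb x))) => [<-|nx]; first exact: connect0.
  apply: connect1; rewrite /= eNN // nx /=.
  by rewrite (pb_def (pb_in x) rB) eqxx.
have to_rep x : connect e x (rep (pb x)).
  case hx: (isY s x); last by apply: to_repN; rewrite hx.
  have [c [hc ct _ nb]] := Ynbr hx.
  have [ec _ _] := tof_mem (Y_noncore hx) ct.
  apply: connect_trans (connect1 _) _; first by rewrite /= nb.
  by rewrite -ec; exact: to_repN.
apply/andP; split; first by apply/set0Pn; exists u0.
apply/forall_inP => u _; apply/forall_inP => w _.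
apply: connect_trans (to_rep u) _; rewrite esym.
apply: connect_trans (to_rep w) _; rewrite esym.
have cB := forall_inP (forall_inP Mc _ (pb_in u)) _ (pb_in w).
apply: (connect_lift (h := rep) _ cB) => B1 B2 /= H.
have /and4P [P1 P2 nB _] := mgr_in H.
have [r1 h1] := rep_spec _ P1; have [r2 h2] := rep_spec _ P2.
apply: connect1; rewrite /= eNN // (pb_def P1 r1) (pb_def P2 r2) H orbT andbT.
by apply: contraNneq nB => ee; rewrite -(pb_def P1 r1) ee (pb_def P2 r2).
Qed.

Lemma Y_leaf u : isY s u -> is_leaf [set: V] g u.
Proof.
move=> hu; have [c [_ _ _ nb]] := Ynbr hu.
apply/cards1P; exists c; apply/setP => w.
by rewrite in_set1 /open_nbh in_set in_setT /= nb.
Qed.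

Lemma two_pts_K x y : x != y -> (forall z, z = x \/ z = y) -> (x, y) \in g -> g = Kset V.
Proof.
move=> nxy H xy; apply/setP => -[a b]; rewrite [RHS]inE /=.
have ix z : ((z, z) \in g) = false by apply/negbTE; exact: g_irr.
case: (H a) => ->; case: (H b) => ->; rewrite ?eqxx ?ix //= ?xy ?nxy //.
by rewrite g_sym xy eq_sym nxy.
Qed.

Lemma Zcore v : isZ s v = (v \in cr (pb v)) && (1 < #|cr (pb v)|).
Proof.
apply/idP/andP => [zv|[vc c2]].
  have vc : v \in cr (pb v).
    case: (boolP (v \in cr (pb v))) => // nc; exfalso; have [_ vt] := noncore nc.
    case/orP: (tuft_XY (tof_ok nc) vt) => [/XnZ|yv]; first by rewrite zv.
    by move: (ZnY zv); rewrite yv.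
  split => //; case/or3P: (cr_ok (pb_in v)) => [/eqP e|/andP [_ /forall_inP al]|/andP [] //].
    by rewrite e inE in vc.
  by move: (XnZ (al v vc)); rewrite zv.
case/or3P: (cr_ok (pb_in v)) => [/eqP e|/andP [/eqP c1 _]|/andP [_ /forall_inP al]].
- by rewrite e inE in vc.
- by rewrite c1 in c2.
- exact: al.
Qed.

Lemma core_nbh u w : u \in cr (pb u) -> w \in cr (pb u) -> N w = N u.
Proof.
move=> uc wc; have hu := cr_nY (pb_in u) uc; have hw := cr_nY (pb_in u) wc.
have ew : pb w = pb u by apply: pb_def (pb_in u) _; exact: subsetP (cr_sub (pb_in u)) w wc.
apply/setP => z; case hz: (isY s z).
  have F x : x \in cr (pb x) -> ~~ isY s x -> (z \in N x) = false.
    move=> xc hx; rewrite cnbE; apply/negbTE; rewrite negb_or.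
    apply/andP; split; first by apply: contraTneq hz => ->; rewrite (negbTE hx).
    rewrite eNY //; apply/negP => xt.
    by have [_ nc _] := tof_mem (Y_noncore hz) xt; rewrite xc in nc.
  by rewrite !F // ew.
have E x : ~~ isY s x -> (z \in N x) = (z \in Kf (pb x)).
  by move=> hx; rewrite -cnN // cn_cnb hz.
by rewrite !E // ew.
Qed.

Lemma sib_core x x' : ~~ isY s x -> ~~ isY s x' -> x' != x -> N x' = N x ->
  x \in cr (pb x) /\ pb x' = pb x.
Proof.
move=> hx hx' nx e; split.
  case: (boolP (x \in cr (pb x))) => // nc; exfalso; have [y yt hy] := tuft_Y (tof_ok nc).
  have [_ _ ety] := tof_mem nc yt.
  have [_ xt] := noncore nc.
  have xy : (x, y) \in g by rewrite eNY // ety.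
  have : y \in N x' by rewrite e cnbE xy orbT.
  rewrite cnbE => /orP [/eqP eyx|x'y]; first by move: hx'; rewrite -eyx hy.
  rewrite eNY // ety in x'y.
  by move/negP: nx; apply; apply/eqP; exact: (tuft_nY (tof_ok nc)) x'y xt hx' hx.
apply: Kf_inj (pb_in _) (pb_in _) _; rewrite -!cnN //.
by apply/setP => z; rewrite !cn_cnb e.
Qed.

Lemma Y_sib u w : isY s u -> w != u -> N w = N u -> XY_ok s /\ g = Kset V.
Proof.
move=> hu nwu e; have [c [hc ct xc nb]] := Ynbr hu.
have [ec _ _] := tof_mem (Y_noncore hu) ct.
have ewc : w = c.
  have : w \in N u by rewrite -e cnbE eqxx.
  by rewrite cnbE (negbTE nwu) nb /= => /eqP.
subst w.
have cz z : (c, z) \in g -> z = u.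
  move=> cz; have : z \in N u by rewrite -e cnbE cz orbT.
  rewrite cnbE nb => /orP [/eqP //|/eqP ezc].
  by rewrite ezc (negbTE (g_irr c)) in cz.
have nYB z : ~~ isY s z -> pb z = pb c -> z = c.
  move=> hz ez; apply/eqP; apply/negPn/negP => nzc.
  have : (c, z) \in g by rewrite eNN // ez eqxx eq_sym nzc.
  by move/cz => ezu; move: hz; rewrite ezu hu.
have hno B' : (pb c, B') \notin mgr.
  apply/negP => H; have /and4P [_ P2 nB _] := mgr_in H.
  have [z zB hz] := block_nY P2; have ez := pb_def P2 zB.
  have : (c, z) \in g.
    rewrite eNN // ez H orbT andbT.
    by apply: contraNneq nB => ecz; rewrite -ez -ecz.
  by move/cz => ezu; move: hz; rewrite ezu hu.
have sb := single_block (pb_in c) hno.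
have all2 z : z = u \/ z = c.
  case hz: (isY s z).
    have [c' [hc' c't _ nb']] := Ynbr hz.
    have ecc : c' = c := nYB c' hc' (sb c').
    by left; apply: cz; rewrite g_sym nb' ecc.
  by right; apply: nYB; [rewrite hz | exact: sb].
have nuc : u != c by apply: contraTneq hu => ->; rewrite (negbTE hc).
have xu : isX s u = false by apply/negbTE; apply: contraL hu; exact: XnY.
have yc : isY s c = false by apply/negbTE.
have zu : isZ s u = false by apply/negbTE; apply: contraL hu; exact: ZnY.
have zc : isZ s c = false by apply/negbTE; exact: XnZ.
split; last by apply: two_pts_K nuc all2 _; rewrite nb.
apply/and3P; split.
- apply/cards1P; exists c; apply/setP => z; rewrite !inE.
  by case: (all2 z) => ->; rewrite ?eqxx ?xc ?xu // (negbTE nuc).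
- apply/cards1P; exists u; apply/setP => z; rewrite !inE.
  by case: (all2 z) => ->; rewrite ?eqxx ?hu ?yc // eq_sym (negbTE nuc).
- rewrite cards_eq0; apply/eqP/setP => z; rewrite !inE.
  by case: (all2 z) => ->; rewrite ?zu ?zc.
Qed.

Lemma leaf_sib u w : ~~ isY s u -> ~~ isY s w -> w != u -> N w = N u ->
  is_leaf [set: V] g u -> E2Z_ok s /\ g = Kset V.
Proof.
move=> hu hw nwu e lu.
have [uc ewu] := sib_core hu hw nwu e.
have nuw : u != w by rewrite eq_sym.
have [wc _] := sib_core hw hu nuw (esym e).
have uw : (u, w) \in g by rewrite eNN // ewu eqxx /= andbT.
have [x nb] := leaf1 lu.
have exw : w = x by apply/eqP; rewrite -nb.
subst x.
have uz z : (u, z) \in g -> z = w by rewrite nb => /eqP.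
have nYB z : ~~ isY s z -> pb z = pb u -> z = u \/ z = w.
  move=> hz ez; case: (eqVneq z u) => [->|nzu]; [by left | right].
  by apply: uz; rewrite eNN // ez eqxx eq_sym nzu.
have inB z : pb z = pb u -> z = u \/ z = w.
  case hz: (isY s z); last by apply: nYB; rewrite hz.
  move=> ez; have nc := Y_noncore hz.
  have [c ct xc] := tuft_X (tof_ok nc).
  have [ec ncc _] := tof_mem nc ct.
  case: (nYB c (XnY xc)); first by rewrite ec.
    by move=> ecu; rewrite ecu uc in ncc.
  by move=> ecw; rewrite ecw wc in ncc.
have hno B' : (pb u, B') \notin mgr.
  apply/negP => H; have /and4P [_ P2 nB _] := mgr_in H.
  have [z zB hz] := block_nY P2; have ez := pb_def P2 zB.
  have : (u, z) \in g.
    rewrite eNN // ez H orbT andbT.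
    by apply: contraNneq nB => euz; rewrite -ez -euz.
  by move/uz => ezw; move: nB; rewrite -ez ezw ewu eqxx.
have sb := single_block (pb_in u) hno.
have all2 z : z = u \/ z = w := inB z (sb z).
have c2 : 1 < #|cr (pb u)|.
  by apply/card_gt1P; exists u, w; split => //; rewrite -ewu.
have zu : isZ s u by rewrite Zcore uc c2.
have zw : isZ s w by rewrite Zcore wc /= ewu c2.
split; last by apply: two_pts_K nuw all2 uw.
apply/and3P; split.
- rewrite cards_eq0; apply/eqP/setP => z; rewrite !inE.
  by case: (all2 z) => ->; apply/negbTE; apply/negP => /XnZ; rewrite ?zu ?zw.
- rewrite cards_eq0; apply/eqP/setP => z; rewrite !inE.
  by case: (all2 z) => ->; apply/negbTE; apply: ZnY.
- apply/cards2P; exists u, w; split => //; apply/setP => z; rewrite !inE.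
  by case: (all2 z) => ->; rewrite ?zu ?zw ?eqxx ?orbT.
Qed.

Lemma psi_valid : G_ne2_XXYZ s g \/ ((XY_ok s || E2Z_ok s) /\ g = Kset V).
Proof.
case: (boolP ((XY_ok s || E2Z_ok s) && (g == Kset V))) => [/andP [H /eqP e]|nex].
  by right.
left.
have exc1 : XY_ok s /\ g = Kset V -> False.
  by move=> [h e]; move: nex; rewrite h e eqxx.
have exc2 : E2Z_ok s /\ g = Kset V -> False.
  by move=> [h e]; move: nex; rewrite h orbT e eqxx.
have sib_nY v w : w != v -> N w = N v -> ~~ isY s v /\ ~~ isY s w.
  move=> nwv e; case hv: (isY s v); first by case: exc1; apply: Y_sib hv nwv e.
  case hw: (isY s w) => //.
  by case: exc1; apply: Y_sib hw _ (esym e); rewrite eq_sym.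
apply/and5P; split.
- exact: g_simple.
- exact: g_conn.
- apply/forallP => v; apply/eqP; apply/idP/idP.
    case/existsP => w /andP [_ /andP [nwv /eqP e]].
    have [hv hw] := sib_nY v w nwv e.
    have [vc ewv] := sib_core hv hw nwv e.
    have nvw : v != w by rewrite eq_sym.
    have [wc _] := sib_core hw hv nvw (esym e).
    rewrite Zcore vc /=; apply/card_gt1P; exists v, w; split => //.
    by rewrite -ewv.
  rewrite Zcore => /andP [vc /card_gt1P [x [y [xc yc nxy]]]].
  have [w wc nwv] : exists2 w, w \in cr (pb v) & w != v.
    case: (eqVneq x v) => [exv|nxv]; last by exists x.
    by exists y => //; rewrite -exv eq_sym.
  by apply/existsP; exists w; rewrite in_setT nwv /= (core_nbh vc wc) eqxx.
- by apply/forallP => v; apply/implyP; exact: Y_leaf.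
- apply/forallP => v; apply/negP => /andP [lv /existsP [w /andP [_ /andP [nwv /eqP e]]]].
  have [hv hw] := sib_nY v w nwv e.
  by case: exc2; exact: leaf_sib hv hw nwv e lv.
Qed.

End Rev.
Set Implicit Arguments.
Unset Strict Implicit.
Unset Printing Implicit Defensive.

Definition graph_of (V : finType) (x : LHSraw V) : {set V * V} :=
  match x with inl g => g | inr _ => Kset V end.

Lemma phi_ok (V : finType) (s : V -> 'I_3) (x : LHSraw V) :
  LHS_ok s x -> MP_ok s (phi s x) /\ psiG s (phi s x) = graph_of x.
Proof.
case: x => [g|[u|u]] /= H.
- split; first exact: phiG_ok (G_sym H) (G_Y H) (G_conn H) (G_X H) (G_Z H).
  exact: psi_phi (G_irr H) (G_sym H) (G_Y H).
- have [gY gc gX gZ] := K_good_XY H.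
  split; first exact: phiG_ok (@K_sym V) gY gc gX gZ.
  exact: psi_phi (@K_irr V) (@K_sym V) gY.
- have [gY gc gX gZ] := K_good_E2Z H.
  split; first exact: phiG_ok (@K_sym V) gY gc gX gZ.
  exact: psi_phi (@K_irr V) (@K_sym V) gY.
Qed.

Lemma XY_E2Z (V : finType) (s : V -> 'I_3) : XY_ok s -> E2Z_ok s -> False.
Proof. by case/and3P => /eqP hx _ _ /and3P [/eqP hx' _ _]; rewrite hx in hx'. Qed.

Theorem theorem3p4 :
  natural_iso3 LHS_ok MP_ok LHS_tr MP_tr.
Proof.
exists phi; split.
- by move=> V s x Hx; have [] := phi_ok Hx.
- move=> V s x y Hx Hy e.
  have [_ ex] := phi_ok Hx; have [_ ey] := phi_ok Hy.
  have eg : graph_of x = graph_of y by rewrite -ex -ey e.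
  case: x Hx eg {ex e} => [g|[[]|[]]] /= Hx; case: y Hy {ey} => [g'|[[]|[]]] /= Hy //= eg.
  + by rewrite eg.
  + by rewrite eg (negbTE (not_G_K (s := s) _)) ?Hy in Hx.
  + by rewrite eg (negbTE (not_G_K (s := s) _)) ?Hy ?orbT in Hx.
  + by rewrite -eg (negbTE (not_G_K (s := s) _)) ?Hx in Hy.
  + by case: (XY_E2Z Hx Hy).
  + by rewrite -eg (negbTE (not_G_K (s := s) _)) ?Hx ?orbT in Hy.
  + by case: (XY_E2Z Hy Hx).
- move=> V s y Hy; case: (psi_valid Hy) => [G|[H e]].
    by exists (inl (psiG s y)); split => //; exact: phi_psi Hy.
  case/orP: H => H.
    by exists (inr (inl tt)); split => //=; rewrite -e; exact: phi_psi Hy.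
  by exists (inr (inr tt)); split => //=; rewrite -e; exact: phi_psi Hy.
- move=> V W s t f fb ft [g|u] Hx /=; first exact: phiG_f.
  by rewrite -(Kset_f fb); exact: phiG_f.
Qed.
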